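(* Let $(\Sigma_k^+,d,\sigma)$ be the full one-sided shift on $k\ge 2$ symbols. Then for every $\alpha>0$, $$\widetilde h_{top}(\sigma,\Sigma_k^+)=\log k<(1+\alpha)\log k=h^\alpha_{top}(\sigma,\Sigma_k^+).$$
   Context: $\Sigma_k^+=\{0,\dots,k-1\}^{\mathbb N}$ with points $x=(x_0,x_1,\dots)$, metric $d(x,y)=e^{-n(x,y)}$ where $n(x,y)$ is the first index where $x,y$ disagree ($n(x,x)=\infty$), and $\sigma$ the left shift. For a TDS $(X,d,f)$: $d_n^\alpha(x,y)=\max_{0\le i\le n-1}e^{\alpha i}d(f^ix,f^iy)$; $r_n(f,\alpha,X,\varepsilon)$ is the minimal cardinality of a set $E$ with every $x\in X$ having some $y\in E$ with $d_n^\alpha(x,y)<\varepsilon$; $h^\alpha_{top}(f,X)=\lim_{\varepsilon\to0}\limsup_n\frac1n\log r_n(f,\alpha,X,\varepsilon)$. Neutralized topological entropy: $B_n(x,r)=\{y:d(f^jx,f^jy)<r,\ 0\le j\le n-1\}$; $r_n(X,e^{-n\varepsilon})$ is the smallest number of balls $B_n(x,e^{-n\varepsilon})$ needed to cover $X$; $\widetilde h_{top}(f,X,\varepsilon)=\limsup_{n\to\infty}\frac1n\log r_n(X,e^{-n\varepsilon})$ and $\widetilde h_{top}(f,X)=\lim_{\varepsilon\to0}\widetilde h_{top}(f,X,\varepsilon)$. *)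

(* Defs.v *)
From Stdlib Require Import Reals Lra Lia List ClassicalEpsilon Classical Arith.
From Coquelicot Require Import Coquelicot.
Open Scope R_scope.

Lemma least_exists (P : nat -> Prop) :
  (exists n, P n) -> exists n, P n /\ forall m, P m -> (n <= m)%nat.
Proof.
  intros [n Hn].
  revert Hn. induction n as [n IH] using (well_founded_induction lt_wf).
  intros Hn.
  destruct (classic (exists m, (m < n)%nat /\ P m)) as [[m [Hm HPm]] | Hno].
  - exact (IH m Hm HPm).
  - exists n; split; [exact Hn|].
    intros m HPm. destruct (le_lt_dec n m) as [Hle|Hlt]; [exact Hle|].
    exfalso; apply Hno; exists m; auto.
Qed.

(* nat_min P = the least n with P n (0 if there is none). *)
Definition nat_min (P : nat -> Prop) : nat :=
  match excluded_middle_informative (exists n, P n) with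
  | left H => proj1_sig (constructive_indefinite_description _ (least_exists P H))
  | right _ => 0%nat
  end.

Section TDS.
Context {X : Type} (Xs : X -> Prop) (d : X -> X -> R) (f : X -> X).

Fixpoint d_alpha (alpha : R) (n : nat) (x y : X) : R :=
  match n with
  | O => 0
  | S m => Rmax (d_alpha alpha m x y)
                (exp (alpha * INR m) * d (Nat.iter m f x) (Nat.iter m f y))
  end.

Definition alpha_spanning (alpha : R) (n : nat) (eps : R) (E : list X) : Prop :=
  (forall y, In y E -> Xs y) /\
  (forall x, Xs x -> exists y, In y E /\ d_alpha alpha n x y < eps).

Definition r_alpha (alpha : R) (n : nat) (eps : R) : nat :=
  nat_min (fun m => exists E : list X, length E = m /\ alpha_spanning alpha n eps E).

Definition alpha_entropy_eps (alpha eps : R) : Rbar :=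
  LimSup_seq (fun n => / INR n * ln (INR (r_alpha alpha n eps))).

Definition alpha_entropy_is (alpha h : R) : Prop :=
  filterlim (fun eps => alpha_entropy_eps alpha eps) (at_right 0) (Rbar_locally (Finite h)).

Definition bowen_ball (n : nat) (x : X) (r : R) (y : X) : Prop :=
  forall j, (j < n)%nat -> d (Nat.iter j f x) (Nat.iter j f y) < r.

Definition bowen_cover (n : nat) (r : R) (E : list X) : Prop :=
  (forall x, In x E -> Xs x) /\
  (forall y, Xs y -> exists x, In x E /\ bowen_ball n x r y).

Definition r_bowen (n : nat) (r : R) : nat :=
  nat_min (fun m => exists E : list X, length E = m /\ bowen_cover n r E).

Definition neutral_entropy_eps (eps : R) : Rbar :=
  LimSup_seq (fun n => / INR n * ln (INR (r_bowen n (exp (- INR n * eps))))).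

Definition neutral_entropy_is (h : R) : Prop :=
  filterlim neutral_entropy_eps (at_right 0) (Rbar_locally (Finite h)).

End TDS.

Definition Sigma (k : nat) (x : nat -> nat) : Prop := forall i, (x i < k)%nat.

Definition shift (x : nat -> nat) : nat -> nat := fun i => x (S i).

Definition dshift (x y : nat -> nat) : R :=
  match excluded_middle_informative (exists n, x n <> y n) with
  | left _ => exp (- INR (nat_min (fun n => x n <> y n)))
  | right _ => 0
  end.

(* Main.v *)
Require Import Defs.
From Stdlib Require Import Reals Lra Lia List Classical ClassicalEpsilon.
From Coquelicot Require Import Coquelicot.
Open Scope R_scope.

Lemma nat_min_spec (P : nat -> Prop) : (exists n, P n) ->
  P (nat_min P) /\ forall m, P m -> (nat_min P <= m)%nat.
Proof.
  intros H. unfold nat_min.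
  destruct (excluded_middle_informative _) as [H'|H']; [|contradiction].
  destruct (constructive_indefinite_description _ _) as [n [Hn Hmin]]. simpl. auto.
Qed.

Lemma nat_min_eq (P : nat -> Prop) n : P n -> (forall m, P m -> (n <= m)%nat) -> nat_min P = n.
Proof.
  intros Hn Hm. destruct (nat_min_spec P (ex_intro _ n Hn)) as [H1 H2].
  specialize (H2 n Hn). specialize (Hm _ H1). lia.
Qed.

Fixpoint code (k L : nat) (x : nat -> nat) : nat :=
  match L with O => O | S L' => (x O + k * code k L' (shift x))%nat end.

Lemma code_lt k L x : Sigma k x -> (code k L x < k ^ L)%nat.
Proof.
  revert x; induction L as [|L IH]; intros x Hx; simpl; [lia|].
  assert (H0 := Hx O). assert (Hs : Sigma k (shift x)) by (intro i; apply Hx).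
  specialize (IH _ Hs). nia.
Qed.

Definition agree (L : nat) (x y : nat -> nat) := forall i, (i < L)%nat -> x i = y i.

Lemma code_agree k L x y : Sigma k x -> Sigma k y -> code k L x = code k L y -> agree L x y.
Proof.
  revert x y; induction L as [|L IH]; intros x y Hx Hy He i Hi; [lia|].
  simpl in He. assert (Hx0 := Hx O). assert (Hy0 := Hy O).
  set (a := code k L (shift x)) in *. set (b := code k L (shift y)) in *.
  assert (Hab : a = b).
  { destruct (Nat.lt_total a b) as [H|[H|H]]; auto.
    - assert (k * b >= k * a + k)%nat by nia. lia.
    - assert (k * a >= k * b + k)%nat by nia. lia. }
  assert (x O = y O) by lia.
  destruct i as [|i]; auto.
  apply (IH (shift x) (shift y)); auto; try (intro j; unfold shift; auto); lia.
Qed.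

Lemma agree_code k L x y : agree L x y -> code k L x = code k L y.
Proof.
  revert x y; induction L as [|L IH]; intros x y H; simpl; auto.
  rewrite (H O) by lia. f_equal. f_equal. apply IH. intros i Hi. unfold shift. apply H. lia.
Qed.

Lemma code_surj k L c : (1 <= k)%nat -> (c < k ^ L)%nat -> exists z, Sigma k z /\ code k L z = c.
Proof.
  intros hk. revert c; induction L as [|L IH]; intros c Hc.
  - exists (fun _ => O). split; [intro; lia|]. simpl in *. lia.
  - simpl in Hc.
    assert (Hq : (c / k < k ^ L)%nat) by (apply Nat.Div0.div_lt_upper_bound; lia).
    destruct (IH _ Hq) as [z' [Hz' Hc']].
    exists (fun i => match i with O => (c mod k)%nat | S j => z' j end). split.
    + intros [|i]; [apply Nat.mod_upper_bound; lia| apply Hz'].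
    + simpl. unfold shift at 1. change (code k L (fun i => z' i)) with (code k L z'). rewrite Hc'.
      rewrite (Nat.div_mod_eq c k) at 3. lia.
Qed.

Definition Cov k L (E : list (nat -> nat)) :=
  (forall y, In y E -> Sigma k y) /\ (forall x, Sigma k x -> exists y, In y E /\ agree L x y).

Lemma list_exists k L m : (1 <= k)%nat -> (m <= k ^ L)%nat -> exists E : list (nat -> nat),
  length E = m /\ (forall y, In y E -> Sigma k y) /\
  (forall c, (c < m)%nat -> exists y, In y E /\ code k L y = c).
Proof.
  intros hk. induction m as [|m IH]; intros Hm.
  - exists nil. simpl. repeat split; intros; [contradiction|lia].
  - destruct IH as [E [HE1 [HE2 HE3]]]; [lia|].
    destruct (code_surj k L m hk) as [z [Hz Hzc]]; [lia|].
    exists (z :: E). simpl. repeat split; [lia| |].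
    + intros y [<-|Hy]; auto.
    + intros c Hc. destruct (Nat.eq_dec c m) as [->|Hne].
      * exists z; auto.
      * destruct (HE3 c) as [y [Hy Hyc]]; [lia|]. exists y; auto.
Qed.

Lemma count k L (hk : (1 <= k)%nat) (P : list (nat -> nat) -> Prop) :
  (forall E, P E <-> Cov k L E) ->
  nat_min (fun m => exists E, length E = m /\ P E) = (k ^ L)%nat.
Proof.
  intros HP. apply nat_min_eq.
  - destruct (list_exists k L (k ^ L) hk (le_n _)) as [E [HE1 [HE2 HE3]]].
    exists E. split; auto. apply HP. split; auto.
    intros x Hx. destruct (HE3 (code k L x)) as [y [Hy Hyc]]; [apply code_lt; auto|].
    exists y. split; [auto|]. apply (code_agree k L x y Hx (HE2 y Hy)). symmetry. exact Hyc.
  - intros m [E [<- HE]]. apply HP in HE. destruct HE as [HE1 HE2].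
    rewrite <- (length_seq (k ^ L) 0), <- (length_map (code k L) E).
    apply NoDup_incl_length; [apply seq_NoDup|].
    intros c Hc. apply in_seq in Hc.
    destruct (code_surj k L c hk) as [z [Hz Hzc]]; [lia|].
    destruct (HE2 z Hz) as [y [Hy Ha]]. apply in_map_iff. exists y. split; auto.
    rewrite <- Hzc. symmetry. apply agree_code. auto.
Qed.
Definition Nf (r : R) : nat := nat_min (fun m => r < INR m).

Lemma Nf_ex r : exists m, r < INR m.
Proof.
  destruct (INR_unbounded r) as [n Hn]. exists n. lra.
Qed.

Lemma Nf_spec r m : r < INR m <-> (Nf r <= m)%nat.
Proof.
  destruct (nat_min_spec _ (Nf_ex r)) as [H1 H2]. fold (Nf r) in H1, H2.
  split; [apply H2|]. intros H. apply le_INR in H. lra.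
Qed.

Lemma Nf_bounds r : 0 <= r -> r < INR (Nf r) <= r + 1 /\ (1 <= Nf r)%nat.
Proof.
  intros Hr. assert (H1 : r < INR (Nf r)) by (apply Nf_spec; lia).
  assert (Hp : (1 <= Nf r)%nat).
  { destruct (Nf r) eqn:E; [simpl in H1; lra| lia]. }
  repeat split; auto.
  destruct (Rle_or_lt (INR (Nf r)) (r + 1)) as [H|H]; auto.
  assert (H' : r < INR (Nf r - 1)).
  { rewrite minus_INR by lia. simpl. lra. }
  apply Nf_spec in H'. lia.
Qed.

Lemma Nf_mono r s : r <= s -> (Nf r <= Nf s)%nat.
Proof.
  intros H. apply Nf_spec. assert (s < INR (Nf s)) by (apply Nf_spec; lia). lra.
Qed.

Lemma dshift_lt u v r : 0 <= r -> (dshift u v < exp (- r) <-> agree (Nf r) u v).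
Proof.
  intros Hr. unfold dshift.
  destruct (excluded_middle_informative _) as [Hd|Hd].
  - destruct (nat_min_spec _ Hd) as [Hm1 Hm2].
    set (m := nat_min (fun n => u n <> v n)) in *.
    split.
    + intros H. apply exp_lt_inv in H.
      assert (Hm : (Nf r <= m)%nat) by (apply Nf_spec; lra).
      intros i Hi. destruct (Nat.eq_dec (u i) (v i)) as [E|E]; auto.
      specialize (Hm2 i E). lia.
    + intros H. apply exp_increasing.
      destruct (Compare_dec.le_lt_dec (Nf r) m) as [Hle|Hlt].
      * apply Nf_spec in Hle. lra.
      * exfalso. apply Hm1. apply H. exact Hlt.
  - split; intros _.
    + intros i _. destruct (Nat.eq_dec (u i) (v i)) as [E|E]; auto.
      exfalso; apply Hd; exists i; auto.
    + apply exp_pos.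
Qed.

Lemma iter_shift j (x : nat -> nat) t : Nat.iter j shift x t = x (j + t)%nat.
Proof.
  revert t; induction j as [|j IH]; intros t; simpl; auto.
  unfold shift at 1. rewrite IH. f_equal. lia.
Qed.

Lemma comb (N : nat -> nat) n (P : nat -> Prop) :
  (1 <= n)%nat -> (forall i, (1 <= N i)%nat) -> (forall i, (i < n)%nat -> (N i <= N (n - 1))%nat) ->
  ((forall i, (i < n)%nat -> forall t, (t < N i)%nat -> P (i + t)%nat) <->
   (forall j, (j < n - 1 + N (n - 1))%nat -> P j)).
Proof.
  intros Hn HN Hmono. split.
  - intros H j Hj. destruct (Compare_dec.lt_dec j n) as [Hl|Hl].
    + replace j with (j + 0)%nat by lia. apply (H j Hl 0%nat). specialize (HN j). lia.
    + replace j with (n - 1 + (j - (n - 1)))%nat by lia. apply (H (n - 1)%nat); lia.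
  - intros H i Hi t Ht. apply H. specialize (Hmono i Hi). lia.
Qed.

Lemma bowen_char n eps x y : (1 <= n)%nat -> 0 < eps ->
  (bowen_ball dshift shift n x (exp (- INR n * eps)) y <->
   agree (n - 1 + Nf (INR n * eps)) x y).
Proof.
  intros Hn He. assert (Hr : 0 <= INR n * eps) by (apply Rmult_le_pos; [apply pos_INR|lra]).
  rewrite Ropp_mult_distr_l_reverse.
  unfold bowen_ball, agree.
  rewrite <- (comb (fun _ => Nf (INR n * eps)) n (fun i => x i = y i)); auto;
    [| intros; apply (Nf_bounds _ Hr)].
  split.
  - intros H i Hi t Ht. specialize (H i Hi). apply dshift_lt in H; auto. specialize (H t Ht).
    rewrite !iter_shift in H. auto.
  - intros H j Hj. apply dshift_lt; auto. intros t Ht. rewrite !iter_shift. auto.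
Qed.

Lemma d_alpha_lt alpha n (x y : nat -> nat) c : 0 < c ->
  (d_alpha dshift shift alpha n x y < c <->
   forall i, (i < n)%nat -> exp (alpha * INR i) * dshift (Nat.iter i shift x) (Nat.iter i shift y) < c).
Proof.
  intros Hc. induction n as [|n IH]; simpl.
  - split; intros; [lia|lra].
  - split.
    + intros H i Hi. destruct (Nat.eq_dec i n) as [->|Hne].
      * eapply Rle_lt_trans; [apply Rmax_r|exact H].
      * apply IH; [eapply Rle_lt_trans; [apply Rmax_l|exact H]|lia].
    + intros H. apply Rmax_lub_lt; [apply IH; intros; apply H; lia| apply H; lia].
Qed.

Lemma mul_lt_iff p D e : 0 < p -> (p * D < e <-> D < e * / p).
Proof.
  intros Hp. assert (E : p * (e * / p) = e) by (field; lra).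
  split; intros H.
  - apply Rmult_lt_reg_l with p; auto. rewrite E. auto.
  - rewrite <- E. apply Rmult_lt_compat_l; auto.
Qed.

Lemma alpha_char alpha n eps x y : (1 <= n)%nat -> 0 < alpha -> 0 < eps < 1 ->
  (d_alpha dshift shift alpha n x y < eps <->
   agree (n - 1 + Nf (alpha * INR (n - 1) - ln eps)) x y).
Proof.
  intros Hn Ha He. assert (Hl : ln eps < 0) by (rewrite <- ln_1; apply ln_increasing; lra).
  set (N := fun i => Nf (alpha * INR i - ln eps)).
  assert (Hpos : forall i, 0 <= alpha * INR i - ln eps).
  { intros i. assert (0 <= alpha * INR i) by (apply Rmult_le_pos; [lra|apply pos_INR]). lra. }
  change (Nf (alpha * INR (n - 1) - ln eps)) with (N (n - 1)%nat).
  rewrite d_alpha_lt by lra. unfold agree.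
  rewrite <- (comb N n (fun i => x i = y i)); auto;
    [| intros; apply (Nf_bounds _ (Hpos i))
     | intros i Hi; apply Nf_mono;
       assert (INR i <= INR (n - 1)) by (apply le_INR; lia);
       apply Rplus_le_compat_r; apply Rmult_le_compat_l; lra].
  assert (Hk : forall i, exp (alpha * INR i) * dshift (Nat.iter i shift x) (Nat.iter i shift y) < eps
     <-> forall t, (t < N i)%nat -> x (i + t)%nat = y (i + t)%nat).
  { intros i. rewrite mul_lt_iff by apply exp_pos.
    replace (eps * / exp (alpha * INR i)) with (exp (- (alpha * INR i - ln eps))).
    2:{ unfold Rminus. rewrite Ropp_plus_distr, Ropp_involutive, Rplus_comm, exp_plus, exp_ln, exp_Ropp by lra. reflexivity. }
    rewrite dshift_lt by apply Hpos. unfold agree. split; intros H t Ht; specialize (H t Ht); rewrite !iter_shift in *; auto. }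
  split; intros H i Hi; [apply Hk; apply H; auto | apply Hk; apply H; auto].
Qed.
Lemma agree_sym L x y : agree L x y -> agree L y x.
Proof. intros H i Hi. symmetry. auto. Qed.

Lemma r_bowen_val k n eps : (2 <= k)%nat -> (1 <= n)%nat -> 0 < eps ->
  r_bowen (Sigma k) dshift shift n (exp (- INR n * eps)) = (k ^ (n - 1 + Nf (INR n * eps)))%nat.
Proof.
  intros hk hn he. unfold r_bowen. apply count; [lia|].
  intros E. unfold bowen_cover, Cov. split; intros [H1 H2]; split; auto;
    intros x Hx; destruct (H2 x Hx) as [y [Hy Hb]]; exists y; split; auto.
  - apply bowen_char in Hb; auto. apply agree_sym; auto.
  - apply bowen_char; auto. apply agree_sym; auto.
Qed.

Lemma r_alpha_val k alpha n eps : (2 <= k)%nat -> (1 <= n)%nat -> 0 < alpha -> 0 < eps < 1 ->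
  r_alpha (Sigma k) dshift shift alpha n eps = (k ^ (n - 1 + Nf (alpha * INR (n - 1) - ln eps)))%nat.
Proof.
  intros hk hn ha he. unfold r_alpha. apply count; [lia|].
  intros E. unfold alpha_spanning, Cov. split; intros [H1 H2]; split; auto;
    intros x Hx; destruct (H2 x Hx) as [y [Hy Hb]]; exists y; split; auto.
  - apply alpha_char in Hb; auto.
  - apply alpha_char; auto.
Qed.

Lemma lim_cd c d : is_lim_seq (fun m => c + d / INR (S m)) c.
Proof.
  assert (H : is_lim_seq (fun n => / INR n) 0).
  { replace (Finite 0) with (Rbar_inv p_infty) by reflexivity.
    apply is_lim_seq_inv; [apply is_lim_seq_INR|discriminate]. }
  apply is_lim_seq_incr_1 in H.
  apply (is_lim_seq_scal_l _ d) in H. simpl in H. rewrite Rmult_0_r in H.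
  pose proof (is_lim_seq_plus' _ _ c 0 (is_lim_seq_const c) H) as H2.
  rewrite Rplus_0_r in H2. eapply is_lim_seq_ext; [|exact H2]. intros n. simpl. unfold Rdiv. ring.
Qed.

Lemma squeeze c d1 d2 u : (forall m, c + d1 / INR (S m) <= u m <= c + d2 / INR (S m)) -> is_lim_seq u c.
Proof.
  intros H. apply is_lim_seq_le_le with (fun m => c + d1 / INR (S m)) (fun m => c + d2 / INR (S m)); auto;
  apply lim_cd.
Qed.

Lemma bound_lo c d A s : 0 < s -> c * s + d <= A -> c + d / s <= A / s.
Proof.
  intros Hs H. replace (c + d / s) with ((c * s + d) / s) by (field; lra).
  unfold Rdiv. apply Rmult_le_compat_r; [left; apply Rinv_0_lt_compat; auto|auto].
Qed.

Lemma bound_hi c d A s : 0 < s -> A <= c * s + d -> A / s <= c + d / s.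
Proof.
  intros Hs H. replace (c + d / s) with ((c * s + d) / s) by (field; lra).
  unfold Rdiv. apply Rmult_le_compat_r; [left; apply Rinv_0_lt_compat; auto|auto].
Qed.

Lemma lnk_pos k : (2 <= k)%nat -> 0 < ln (INR k).
Proof.
  intros hk. rewrite <- ln_1. apply ln_increasing; [lra|].
  apply (lt_INR 1 k) in hk. simpl in hk. lra.
Qed.

Lemma neutral_val k eps : (2 <= k)%nat -> 0 < eps ->
  neutral_entropy_eps (Sigma k) dshift shift eps = Finite ((1 + eps) * ln (INR k)).
Proof.
  intros hk he. unfold neutral_entropy_eps.
  apply is_LimSup_seq_unique, is_lim_LimSup_seq, is_lim_seq_incr_1.
  apply squeeze with (- ln (INR k)) 0. intros m.
  rewrite r_bowen_val by (auto; lia).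
  replace (S m - 1)%nat with m by lia.
  assert (Hk : 0 < INR k) by (apply (lt_INR 0 k); lia).
  pose proof (lnk_pos k hk) as Hl.
  rewrite pow_INR, ln_pow by auto. rewrite plus_INR.
  assert (Hr : 0 <= INR (S m) * eps) by (apply Rmult_le_pos; [apply pos_INR|lra]).
  destruct (Nf_bounds _ Hr) as [[B1 B2] _].
  set (N := Nf (INR (S m) * eps)) in *.
  assert (Hs : 0 < INR (S m)) by (apply (lt_INR 0); lia).
  rewrite S_INR in *.
  replace (/ (INR m + 1) * ((INR m + INR N) * ln (INR k))) with (((INR m + INR N) * ln (INR k)) / (INR m + 1))
    by (unfold Rdiv; ring).
  split; [apply bound_lo|apply bound_hi]; auto; nra.
Qed.

Lemma alpha_val k alpha eps : (2 <= k)%nat -> 0 < alpha -> 0 < eps < 1 ->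
  alpha_entropy_eps (Sigma k) dshift shift alpha eps = Finite ((1 + alpha) * ln (INR k)).
Proof.
  intros hk ha he. unfold alpha_entropy_eps.
  assert (Hle : ln eps < 0) by (rewrite <- ln_1; apply ln_increasing; lra).
  apply is_LimSup_seq_unique, is_lim_LimSup_seq, is_lim_seq_incr_1.
  apply squeeze with ((- (1 + alpha) - ln eps) * ln (INR k)) ((- alpha - ln eps) * ln (INR k)).
  intros m.
  rewrite r_alpha_val by (auto; lia).
  replace (S m - 1)%nat with m by lia.
  assert (Hk : 0 < INR k) by (apply (lt_INR 0 k); lia).
  pose proof (lnk_pos k hk) as Hl.
  rewrite pow_INR, ln_pow by auto. rewrite plus_INR.
  assert (Hr : 0 <= alpha * INR m - ln eps).
  { assert (0 <= alpha * INR m) by (apply Rmult_le_pos; [lra|apply pos_INR]). lra. }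
  destruct (Nf_bounds _ Hr) as [[B1 B2] _].
  set (N := Nf (alpha * INR m - ln eps)) in *.
  assert (Hs : 0 < INR (S m)) by (apply (lt_INR 0); lia).
  rewrite S_INR in *.
  replace (/ (INR m + 1) * ((INR m + INR N) * ln (INR k))) with (((INR m + INR N) * ln (INR k)) / (INR m + 1))
    by (unfold Rdiv; ring).
  split; [apply bound_lo|apply bound_hi]; auto; nra.
Qed.
Lemma ballR (x e y : R) : ball x e y <-> Rabs (y - x) < e.
Proof. reflexivity. Qed.

Theorem mainTheorem13 (k : nat) (hk : (2 <= k)%nat) (alpha : R) (halpha : 0 < alpha) :
  neutral_entropy_is (Sigma k) dshift shift (ln (INR k)) /\
  ln (INR k) < (1 + alpha) * ln (INR k) /\
  alpha_entropy_is (Sigma k) dshift shift alpha ((1 + alpha) * ln (INR k)).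
Proof.
  pose proof (lnk_pos k hk) as Hl.
  split; [|split; [nra|]].
  - unfold neutral_entropy_is, filterlim, filter_le, filtermap.
    intros P [d Hd].
    assert (Hp : 0 < d / ln (INR k)) by (apply Rdiv_lt_0_compat; [apply cond_pos|auto]).
    exists (mkposreal _ Hp). intros y Hy Hpos. simpl in Hy. rewrite ballR in Hy.
    rewrite neutral_val by auto. apply Hd. rewrite ballR.
    rewrite Rminus_0_r, Rabs_right in Hy by lra.
    replace ((1 + y) * ln (INR k) - ln (INR k)) with (y * ln (INR k)) by ring.
    rewrite Rabs_right by nra.
    apply (Rmult_lt_compat_r (ln (INR k))) in Hy; auto.
    unfold Rdiv in Hy. rewrite Rmult_assoc, Rinv_l, Rmult_1_r in Hy by lra. auto.
  - unfold alpha_entropy_is, filterlim, filter_le, filtermap.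
    intros P [d Hd].
    exists (mkposreal 1 Rlt_0_1). intros y Hy Hpos. simpl in Hy. rewrite ballR in Hy.
    rewrite Rminus_0_r, Rabs_right in Hy by lra.
    rewrite alpha_val by (auto; lra). apply Hd. apply ball_center.
Qed.
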